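(* Assume the standing conventions of the context, and suppose $\mathcal D_{Z,Z'}\neq\emptyset$. Then: (i) there is a set $\Psi'_0$ of pairwise disjoint consecutive pairs in $Z'_{\mathrm I}$ such that $D_Z=\{\Lambda_{\Psi'}\mid \Psi'\le\Psi'_0\}$; (ii) there is a set $\Psi_0$ of pairwise disjoint consecutive pairs in $Z_{\mathrm I}$ such that $D_{Z'}=\{\Lambda_{\Psi}\mid \Psi\le\Psi_0\}$. (In fact $\Psi'_0$ may be taken to be the union of all consecutive pairs $\Psi'$ in $Z'_{\mathrm I}$ with $(Z,\Lambda_{\Psi'})\in\mathcal D_{Z,Z'}$, and $\Psi_0$ the union of all consecutive pairs $\Psi$ in $Z_{\mathrm I}$ with $(\Lambda_\Psi,Z')\in\mathcal D_{Z,Z'}$.)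
   Context: A symbol is an array $\Lambda=\binom{a'_1,\ldots,a'_{m_1}}{b'_1,\ldots,b'_{m_2}}$ of two strictly decreasing finite sequences of nonnegative integers (top row, bottom row); its defect is $\mathrm{def}(\Lambda)=m_1-m_2$. Standing assumptions: $Z=\binom{a_1,\ldots,a_{m+1}}{b_1,\ldots,b_m}$ is a special symbol of defect $1$, i.e. $a_1\ge b_1\ge a_2\ge b_2\ge\cdots\ge b_m\ge a_{m+1}$; $Z'=\binom{c_1,\ldots,c_{m'}}{d_1,\ldots,d_{m'}}$ is a special symbol of defect $0$, i.e. $c_1\ge d_1\ge c_2\ge d_2\ge\cdots\ge c_{m'}\ge d_{m'}$; and $m'\in\{m,m+1\}$. For a symbol $Y$, $Y_{\mathrm I}$ is the set of entries of $Y$ occurring in exactly one row. For $M\subset Z_{\mathrm I}$, $\Lambda_M$ is the symbol obtained from $Z$ by moving every entry of $M$ to the other row (rows re-sorted decreasingly); for $N\subset Z'_{\mathrm I}$, $\Lambda_N$ is obtained from $Z'$ in the same way. $\overline{\mathcal S}_Z=\{\Lambda_M: M\subset Z_{\mathrm I}\}$, $\overline{\mathcal S}_{Z'}=\{\Lambda_N:N\subset Z'_{\mathrm I}\}$; $\mathcal S_{Z,1}$ (resp. $\mathcal S_{Z',0}$) is the set of elements of $\overline{\mathcal S}_Z$ of defect $1$ (resp. of $\overline{\mathcal S}_{Z'}$ of defect $0$). A consecutive pair in $Z'_{\mathrm I}$ is a two-element subset $\{c_k,d_l\}\subset Z'_{\mathrm I}$, written $\binom{c_k}{d_l}$, with $l\in\{k-1,k\}$;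 a consecutive pair in $Z_{\mathrm I}$ is $\{a_k,b_l\}\subset Z_{\mathrm I}$, written $\binom{a_k}{b_l}$, with $l\in\{k-1,k\}$. For a set $\Psi_0$ of pairwise disjoint consecutive pairs, viewed also as the subset given by the union of its pairs, $\Psi\le\Psi_0$ means that $\Psi$ is the union of some (possibly none) of the pairs in $\Psi_0$. Relation $\overline{\mathcal B}^+_{Z,Z'}\subset\overline{\mathcal S}_Z\times\overline{\mathcal S}_{Z'}$: for $\Lambda=\binom{a'_1,\ldots,a'_{m_1}}{b'_1,\ldots,b'_{m_2}}\in\overline{\mathcal S}_Z$ and $\Lambda'=\binom{c'_1,\ldots,c'_{m'_1}}{d'_1,\ldots,d'_{m'_2}}\in\overline{\mathcal S}_{Z'}$, $(\Lambda,\Lambda')\in\overline{\mathcal B}^+_{Z,Z'}$ iff $\mathrm{def}(\Lambda')=1-\mathrm{def}(\Lambda)$ and: if $m'=m$, $a'_i>d'_i\ge a'_{i+1}$ for $1\le i\le m'_2$ and $b'_{i-1}>c'_i\ge b'_i$ for $1\le i\le m'_1$; if $m'=m+1$, $a'_i\ge d'_i>a'_{i+1}$ for $1\le i\le m'_2$ and $b'_{i-1}\ge c'_i>b'_i$ for $1\le i\le m'_1$; here $b'_0=+\infty$ and nonexistent entries $a'_j,b'_j$ beyond the row lengths are $-\infty$. Then $\mathcal D_{Z,Z'}=\overline{\mathcal B}^+_{Z,Z'}\cap(\mathcal S_{Z,1}\times\mathcal S_{Z',0})$, $D_Z=\{\Lambda'\mid (Z,\Lambda')\in\mathcal D_{Z,Z'}\}$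 and $D_{Z'}=\{\Lambda\mid(\Lambda,Z')\in\mathcal D_{Z,Z'}\}$. *)

(* Defs.v *)
From mathcomp Require Import all_boot all_order all_algebra.
Set Implicit Arguments. Unset Strict Implicit. Unset Printing Implicit Defensive.

(* A symbol (top row, bottom row); rows are finite sequences of naturals,
   listed in decreasing order (index 0 = first entry a'_1). *)
Definition symbol := (seq nat * seq nat)%type.

Definition sdecr (s : seq nat) : bool := sorted (fun x y => y < x) s.

Definition is_symbol (L : symbol) : bool := sdecr L.1 && sdecr L.2.

Definition defect (L : symbol) : int := ((size L.1)%:Z - (size L.2)%:Z)%R.

(* Y_I : entries occurring in exactly one row. *)
Definition singles (Y : symbol) : seq nat :=
  [seq x <- Y.1 ++ Y.2 | (x \in Y.1) != (x \in Y.2)].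

(* Lambda_M : move every entry of M to the other row, re-sort decreasingly. *)
Definition moveM (Y : symbol) (M : seq nat) : symbol :=
  (sort geq ([seq x <- Y.1 | x \notin M] ++ [seq x <- Y.2 | x \in M]),
   sort geq ([seq x <- Y.2 | x \notin M] ++ [seq x <- Y.1 | x \in M])).

Definition Sbar (Y L : symbol) : Prop :=
  exists M : seq nat, {subset M <= singles Y} /\ L = moveM Y M.

Definition special1 (Z : symbol) : Prop :=
  is_symbol Z /\ size Z.1 = (size Z.2).+1 /\
  forall i, i < size Z.2 ->
    nth 0 Z.2 i <= nth 0 Z.1 i /\ nth 0 Z.1 i.+1 <= nth 0 Z.2 i.

Definition special0 (Z' : symbol) : Prop :=
  is_symbol Z' /\ size Z'.1 = size Z'.2 /\
  (forall i, i < size Z'.2 -> nth 0 Z'.2 i <= nth 0 Z'.1 i) /\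
  (forall i, i.+1 < size Z'.1 -> nth 0 Z'.1 i.+1 <= nth 0 Z'.2 i).

(* Comparisons with entries that may be nonexistent (= -infinity);
   [onth s i] is [None] (-infinity) beyond the row length. *)
Definition gtO (x : option nat) (y : nat) : bool :=
  if x is Some a then y < a else false.
Definition geO (x : option nat) (y : nat) : bool :=
  if x is Some a then y <= a else false.
Definition ltO (x : option nat) (y : nat) : bool :=
  if x is Some a then a < y else true.
Definition leO (x : option nat) (y : nat) : bool :=
  if x is Some a then a <= y else true.

(* The relation \bar B^+_{Z,Z'} (0-indexed: index i here is i+1 in the paper).
   m = size Z.2, m' = size Z'.1. *)
Definition Bplus (Z Z' : symbol) (L L' : symbol) : Prop :=
  (defect L' = 1 - defect L)%R /\
  let a := L.1 in let b := L.2 in let c := L'.1 in let d := L'.2 in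
  if size Z'.1 == size Z.2 then
    (forall i, i < size d ->
       gtO (onth a i) (nth 0 d i) && leO (onth a i.+1) (nth 0 d i)) /\
    (forall i, i < size c ->
       ((i == 0) || gtO (onth b i.-1) (nth 0 c i)) && leO (onth b i) (nth 0 c i))
  else
    (forall i, i < size d ->
       geO (onth a i) (nth 0 d i) && ltO (onth a i.+1) (nth 0 d i)) /\
    (forall i, i < size c ->
       ((i == 0) || geO (onth b i.-1) (nth 0 c i)) && ltO (onth b i) (nth 0 c i)).

Definition Drel (Z Z' L L' : symbol) : Prop :=
  Bplus Z Z' L L' /\
  (Sbar Z L /\ defect L = 1%R) /\ (Sbar Z' L' /\ defect L' = 0%R).

(* A consecutive pair in Y_I, written (x, y) = (top_k, bottom_l) with
   l in {k-1, k} (1-indexed), i.e. l = k or l + 1 = k 0-indexed. *)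
Definition cons_pair (Y : symbol) (p : nat * nat) : Prop :=
  exists k l, [/\ k < size Y.1, l < size Y.2, (l == k) || (l.+1 == k),
    p = (nth 0 Y.1 k, nth 0 Y.2 l) &
    (p.1 \in singles Y) && (p.2 \in singles Y)].

Definition pairs_union (P : seq (nat * nat)) : seq nat :=
  flatten [seq [:: p.1; p.2] | p <- P].

Definition disj_cons_pairs (Y : symbol) (P0 : seq (nat * nat)) : Prop :=
  (forall p, p \in P0 -> cons_pair Y p) /\ uniq (pairs_union P0).

(* Main.v *)
Require Import Defs.
From mathcomp Require Import all_boot all_order all_algebra.
From mathcomp Require Import zify.
From Stdlib Require Import Classical.
Set Implicit Arguments. Unset Strict Implicit. Unset Printing Implicit Defensive.


Definition cnt (s : seq nat) (t : nat) : nat := count (fun x => t <= x) s.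

Lemma geq_trans : transitive geq.
Proof. move=> x y z /= h1 h2; exact: leq_trans h2 h1. Qed.

Lemma cnt_nth s t k : sorted geq s ->
  (k < cnt s t) = (k < size s) && (t <= nth 0 s k).
Proof.
elim: s k => [|x s IH] k /=; first by rewrite /cnt /= ltn0.
move=> hp; have hs : sorted geq s by exact: path_sorted hp.
have hall := order_path_min geq_trans hp.
rewrite /cnt /=; case: (leqP t x) => htx.
- case: k => [|k] /=; first by rewrite htx.
  by rewrite add1n ltnS -/(cnt s t) IH.
- have -> : count (fun x0 => t <= x0) s = 0.
    apply/eqP; rewrite -leqn0 leqNgt -has_count; apply/hasPn => y ys.
    have := allP hall y ys => /= hy; apply/negP => h; lia.
  case: k => [|k] /=; first by rewrite (leqNgt t x) htx.
  rewrite add0n ltn0 ltnS; case hk: (k < size s) => //=.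
  have := allP hall (nth 0 s k) (mem_nth 0 hk) => /= hy.
  apply/esym/negP => h; lia.
Qed.

Lemma leq_of_lt A B : (forall k, k < A -> k < B) -> A <= B.
Proof. case: A => // A h; exact: h. Qed.

Lemma G1 (x y : seq nat) e : sorted geq x -> sorted geq y ->
  (forall i, i < size y -> (i < size x) && (nth 0 y i + e <= nth 0 x i)) <->
  (forall t, cnt y t <= cnt x (t + e)).
Proof.
move=> sx sy; split.
- move=> h t; apply: leq_of_lt => k; rewrite !cnt_nth // => /andP[hk ht].
  have /andP[-> h2] := h k hk; rewrite /=.
  by apply: leq_trans h2; rewrite leq_add2r.
- move=> h i hi; have : i < cnt y (nth 0 y i) by rewrite cnt_nth // hi leqnn.
  move=> /leq_trans /(_ (h _)); rewrite cnt_nth //.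
Qed.

Lemma cnt_behead x t y : sorted geq x ->
  (cnt (behead x) t <= y) <-> (cnt x t <= y + 1).
Proof.
case: x => [|u x] /=; first by rewrite /cnt /=; split=> _ //.
move=> hp; have hall := order_path_min geq_trans hp.
rewrite /cnt /=; case: (leqP t u) => htu /=.
- by rewrite add1n addn1 ltnS.
- have -> : count (fun x0 => t <= x0) x = 0.
    apply/eqP; rewrite -leqn0 leqNgt -has_count; apply/hasPn => z zs.
    have := allP hall z zs => /= hz; apply/negP => h; lia.
  by split=> _; lia.
Qed.

Lemma onth_nth0 (s : seq nat) i : onth s i = if i < size s then Some (nth 0 s i) else None.
Proof. elim: s i => [|x s IH] [|i] //=. Qed.

Definition GOspec (GO : option nat -> nat -> bool) e :=
  forall s i y, GO (onth s i) y = (i < size s) && (y + e <= nth 0 s i).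
Definition LOspec (LO : option nat -> nat -> bool) e :=
  forall s i y, LO (onth s i) y = (i < size s) ==> (nth 0 s i + e <= y).

Lemma gtO_spec : GOspec gtO 1.
Proof. by move=> s i y; rewrite onth_nth0; case: ifP => //= _; rewrite addn1. Qed.
Lemma geO_spec : GOspec geO 0.
Proof. by move=> s i y; rewrite onth_nth0; case: ifP => //= _; rewrite addn0. Qed.
Lemma leO_spec : LOspec leO 0.
Proof. by move=> s i y; rewrite onth_nth0; case: ifP => //= _; rewrite addn0. Qed.
Lemma ltO_spec : LOspec ltO 1.
Proof. by move=> s i y; rewrite onth_nth0; case: ifP => //= _; rewrite addn1. Qed.

Lemma dloop GO LO e1 e2 (a d : seq nat) : GOspec GO e1 -> LOspec LO e2 ->
  sorted geq a -> sorted geq d -> size a <= (size d).+1 ->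
  (forall i, i < size d -> GO (onth a i) (nth 0 d i) && LO (onth a i.+1) (nth 0 d i)) <->
  ((forall t, cnt d t <= cnt a (t + e1)) /\ (forall t, cnt a t <= cnt d (t + e2) + 1)).
Proof.
move=> hG hL sa sd hsz.
have sba : sorted geq (behead a) by case: a sa {hsz} => //= x a; exact: path_sorted.
rewrite -(G1 e1 sa sd).
have E : (forall t, cnt a t <= cnt d (t + e2) + 1) <-> (forall t, cnt (behead a) t <= cnt d (t + e2)).
  by split=> h t; apply/(cnt_behead _ _ sa).
rewrite E -(G1 e2 sd sba); split.
- move=> h; split=> i hi.
  + by have := h i hi; rewrite hG => /andP[].
  + have hi' : i < size d by move: hi hsz; rewrite size_behead; lia.
    have := h i hi'; rewrite hL => /andP[_ /implyP]; rewrite hi' /=.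
    have hi2 : i.+1 < size a by move: hi; rewrite size_behead; lia.
    by move/(_ hi2); rewrite -nth_behead.
- move=> [h1 h2] i hi; rewrite hG hL h1 //=; apply/implyP => hi2.
  have hi3 : i < size (behead a) by rewrite size_behead; lia.
  by have /andP[_] := h2 i hi3; rewrite nth_behead.
Qed.

Lemma cloop GO LO e1 e2 (b c : seq nat) : GOspec GO e1 -> LOspec LO e2 ->
  sorted geq b -> sorted geq c -> size b <= size c ->
  (forall i, i < size c -> ((i == 0) || GO (onth b i.-1) (nth 0 c i)) && LO (onth b i) (nth 0 c i)) <->
  ((forall t, cnt c t <= cnt b (t + e1) + 1) /\ (forall t, cnt b t <= cnt c (t + e2))).
Proof.
move=> hG hL sb sc hsz.
have sbc : sorted geq (behead c) by case: c sc {hsz} => //= x c; exact: path_sorted.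
have E : (forall t, cnt c t <= cnt b (t + e1) + 1) <-> (forall t, cnt (behead c) t <= cnt b (t + e1)).
  by split=> h t; apply/(cnt_behead _ _ sc).
rewrite E -(G1 e1 sb sbc) -(G1 e2 sc sb); split.
- move=> h; split=> i hi.
  + have hi' : i.+1 < size c by move: hi; rewrite size_behead; lia.
    by have := h _ hi'; rewrite /= hG -nth_behead => /andP[].
  + have hi' : i < size c by lia.
    have := h i hi'; rewrite hL => /andP[_ /implyP]; rewrite hi /= => /(_ isT) ->.
    by rewrite hi'.
- move=> [h1 h2] i hi; rewrite hG hL; apply/andP; split.
  + case: i hi => //= i hi; have hi3 : i < size (behead c) by rewrite size_behead; lia.
    by have := h1 i hi3; rewrite nth_behead.
  + by apply/implyP => hi2; have /andP[_] := h2 i hi2.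
Qed.

Definition fcnt (Y : symbol) (N : seq nat) t :=
  count (fun z => (t <= z) && (z \notin N)) Y.1 + count (fun z => (t <= z) && (z \in N)) Y.2.

Lemma cnt_moveM1 Y N t : cnt (moveM Y N).1 t = fcnt Y N t.
Proof.
rewrite /cnt /moveM /fcnt /= count_sort count_cat !count_filter.
by congr (_ + _); apply: eq_count => z; rewrite andbC.
Qed.

Lemma cnt_moveM2 Y N t : cnt (moveM Y N).2 t =
  count (fun z => (t <= z) && (z \notin N)) Y.2 + count (fun z => (t <= z) && (z \in N)) Y.1.
Proof.
rewrite /cnt /moveM /= count_sort count_cat !count_filter.
by congr (_ + _); apply: eq_count => z; rewrite andbC.
Qed.


Lemma cnt_moveM_tot Y N t :
  cnt (moveM Y N).1 t + cnt (moveM Y N).2 t = cnt Y.1 t + cnt Y.2 t.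
Proof.
rewrite cnt_moveM1 cnt_moveM2 /fcnt /cnt.
have h (s : seq nat) : count (fun z => t <= z) s =
   count (fun z => (t <= z) && (z \notin N)) s + count (fun z => (t <= z) && (z \in N)) s.
  elim: s => //= z s ->; case: (t <= z); case: (z \in N) => /=; lia.
rewrite (h Y.1) (h Y.2); lia.
Qed.

Lemma sorted_moveM1 Y N : sorted geq (moveM Y N).1.
Proof. apply: sort_sorted => x y /=; exact: leq_total. Qed.
Lemma sorted_moveM2 Y N : sorted geq (moveM Y N).2.
Proof. apply: sort_sorted => x y /=; exact: leq_total. Qed.

Lemma cnt0 s : cnt s 0 = size s.
Proof. by rewrite /cnt count_predT. Qed.

Lemma cnt_split (s : seq nat) (Q : pred nat) t :
  count (fun z => (t <= z) && Q z) s =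
  count (fun z => (t.+1 <= z) && Q z) s + count (fun z => (z == t) && Q z) s.
Proof.
elim: s => //= z s ->; case: (Q z); rewrite /= ?andbT ?andbF //=.
case: (eqVneq z t) => [->|ne]; first by rewrite leqnn ltnn; lia.
have -> : (t <= z) = (t < z) by rewrite leq_eqVlt eq_sym (negbTE ne).
lia.
Qed.

Lemma count_eq_uniq (s : seq nat) (Q : pred nat) t : uniq s ->
  count (fun z => (z == t) && Q z) s = (t \in s) && Q t.
Proof.
elim: s => //= z s IH /andP[zs us]; rewrite IH // in_cons.
case: (eqVneq z t) => [<-|ne] /=.
- by rewrite (negbTE zs) /= addn0.
- by case: ((t \in s) && Q t).
Qed.

Lemma cnt_step s t : uniq s -> cnt s t = cnt s t.+1 + (t \in s).
Proof.
move=> us; have := cnt_split s predT t; rewrite /cnt.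
have E (u : nat) : count (fun z => (u <= z) && predT z) s = count (fun z => u <= z) s.
  by apply: eq_count => z; rewrite andbT.
by rewrite !E => ->; rewrite count_eq_uniq //= andbT.
Qed.

Lemma fcnt_step Y N t : uniq Y.1 -> uniq Y.2 ->
  fcnt Y N t = fcnt Y N t.+1 + ((t \in Y.1) && (t \notin N)) + ((t \in Y.2) && (t \in N)).
Proof.
move=> u1 u2; rewrite /fcnt (cnt_split Y.1 (fun z => z \notin N)) (cnt_split Y.2 (fun z => z \in N)).
by rewrite !count_eq_uniq // addnACA !addnA.
Qed.

Definition ispec (Y : symbol) :=
  [/\ is_symbol Y, size Y.2 <= size Y.1 <= (size Y.2).+1,
      (forall i, i < size Y.2 -> nth 0 Y.2 i <= nth 0 Y.1 i) &
      (forall i, i.+1 < size Y.1 -> nth 0 Y.1 i.+1 <= nth 0 Y.2 i)].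

Lemma special1_ispec Z : special1 Z -> ispec Z.
Proof.
move=> [hs [hsz h]]; split=> //; first by rewrite hsz leqnSn leqnn.
- by move=> i /h [].
- by move=> i; rewrite hsz ltnS => /h [].
Qed.

Lemma special0_ispec Z : special0 Z -> ispec Z.
Proof. by move=> [hs [hsz [h1 h2]]]; split=> //; rewrite hsz leqnn leqnSn. Qed.

Lemma sdecr_geq s : sdecr s -> sorted geq s.
Proof. apply: sub_sorted => x y /=; exact: ltnW. Qed.

Lemma sdecr_uniq s : sdecr s -> uniq s.
Proof.
apply: sorted_uniq; first by move=> x y z /= h1 h2; exact: ltn_trans h2 h1.
by move=> x /=; rewrite ltnn.
Qed.

Lemma ispec_facts Y : ispec Y ->
  [/\ sorted geq Y.1, sorted geq Y.2, uniq Y.1, uniq Y.2 &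
      forall t, cnt Y.2 t <= cnt Y.1 t <= cnt Y.2 t + 1].
Proof.
move=> [/andP[s1 s2] hsz h1 h2].
have g1 := sdecr_geq s1; have g2 := sdecr_geq s2.
split; try exact: sdecr_uniq; rewrite //.
move=> t; apply/andP; split.
- apply: leq_of_lt => k; rewrite !cnt_nth // => /andP[hk ht].
  move: hsz => /andP[hs1 hs2].
  rewrite (leq_trans hk hs1) /=; exact: leq_trans ht (h1 _ hk).
- rewrite addn1; apply: leq_of_lt => -[|k].
  + rewrite cnt_nth // => /andP[hk ht]; by [].
  + rewrite !cnt_nth // => /andP[hk ht]; rewrite ltnS.
    move: hsz => /andP[hs1 hs2].
    have hk2 : k < size Y.2 by lia.
    by rewrite cnt_nth // hk2 (leq_trans ht (h2 _ hk)).
Qed.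

Lemma cnt_mono s t u : t <= u -> cnt s u <= cnt s t.
Proof.
move=> h; rewrite /cnt; elim: s => //= z s IH.
case hu: (u <= z); first by rewrite (leq_trans h hu) /=; lia.
rewrite add0n; exact: leq_trans IH (leq_addl _ _).
Qed.

Lemma nth_dec s i j : sorted geq s -> i <= j -> j < size s -> nth 0 s j <= nth 0 s i.
Proof.
move=> hs hij hj.
have := @sorted_leq_nth _ geq geq_trans (fun x => leqnn x) 0 s hs i j.
rewrite !inE => /(_ (leq_ltn_trans hij hj) hj hij) //.
Qed.

Lemma nth_sdec s i j : sdecr s -> i < j -> j < size s -> nth 0 s j < nth 0 s i.
Proof.
move=> hs hij hj.
have tr : transitive (fun x y : nat => y < x) by move=> x y z /= h1 h2; exact: ltn_trans h2 h1.
have := @sorted_ltn_nth _ (fun x y : nat => y < x) tr 0 s hs i j.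
rewrite !inE => /(_ (ltn_trans hij hj) hj hij) //.
Qed.

Definition ent (Y : symbol) (z : nat) : bool := (z \in Y.1) || (z \in Y.2).

Lemma adj_cons Y x y : ispec Y -> x \in Y.1 -> x \notin Y.2 -> y \in Y.2 -> y \notin Y.1 ->
  (forall z, ent Y z -> ~ (minn x y < z < maxn x y)) -> cons_pair Y (x, y).
Proof.
move=> hY xp xq yq yp hadj.
have [/andP[s1 s2] /andP[hs1 hs2] h1 h2] := hY.
have g1 := sdecr_geq s1; have g2 := sdecr_geq s2.
have hxy : x != y by apply/eqP => e; move: xq; rewrite e yq.
set k := index x Y.1; set l := index y Y.2.
have hk : k < size Y.1 by rewrite index_mem.
have hl : l < size Y.2 by rewrite index_mem.
have ex : nth 0 Y.1 k = x by exact: nth_index.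
have ey : nth 0 Y.2 l = y by exact: nth_index.
exists k, l; split=> //; [|by rewrite ex ey|by rewrite /singles !mem_filter /= !mem_cat xp yq (negbTE xq) (negbTE yp)].
case: (ltngtP l k) => hlk; last by rewrite ?hlk ?eqxx.
-
  case: (eqVneq l.+1 k) => [e|ne]; first by [].
  exfalso.
  have hlk2 : l.+2 <= k by lia.
  have hl1 : l.+1 < size Y.2 by lia.
  set w := nth 0 Y.2 l.+1.
  have w1 : w < y by rewrite -ey; exact: nth_sdec.
  have w2 : nth 0 Y.1 l.+2 <= w by apply: h2; lia.
  have w3 : x <= nth 0 Y.1 l.+2 by rewrite -ex; apply: nth_dec.
  have w4 : nth 0 Y.1 l.+1 <= y by rewrite -ey; apply: h2; lia.
  have w5 : x <= nth 0 Y.1 l.+1 by rewrite -ex; apply: nth_dec => //; lia.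
  have wx : w != x by apply/eqP => e; move: xq; rewrite -e mem_nth.
  have wq : ent Y w by rewrite /ent mem_nth ?orbT.
  apply: (hadj w wq); move: wx; rewrite neq_ltn; case/orP => hh; lia.
-
  exfalso.
  have hk1 : k.+1 < size Y.1 by lia.
  set w := nth 0 Y.1 k.+1.
  have w1 : w < x by rewrite -ex; exact: nth_sdec.
  have w2 : nth 0 Y.2 k.+1 <= w by apply: h1; lia.
  have w3 : y <= nth 0 Y.2 k.+1 by rewrite -ey; apply: nth_dec.
  have w4 : nth 0 Y.2 k <= x by rewrite -ex; apply: h1; lia.
  have w5 : y <= nth 0 Y.2 k by rewrite -ey; apply: nth_dec => //; lia.
  have wy : w != y by apply/eqP => e; move: yp; rewrite -e mem_nth.
  have wq : ent Y w by rewrite /ent mem_nth.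
  apply: (hadj w wq); move: wy; rewrite neq_ltn; case/orP => hh; lia.
Qed.

Lemma cfilter (T : eqType) (P : T -> Prop) (s : seq T) :
  exists s', subseq s' s /\ forall x, x \in s' <-> (x \in s /\ P x).
Proof.
elim: s => [|x s [s1 [hs1 hm]]]; first by exists [::]; split=> // y; rewrite in_nil; split=> // [[]].
case: (classic (P x)) => hP.
- exists (x :: s1); split; first by rewrite /= eqxx.
  move=> y; rewrite !in_cons; case: (eqVneq y x) => [->|ne] //=; exact: hm.
- exists s1; split; first exact: subseq_trans hs1 (subseq_cons s x).
  move=> y; rewrite hm in_cons; case: (eqVneq y x) => [->|ne] //=.
  split=> [[]|[]] //.
Qed.

Lemma count_memsplit (s : seq nat) (Q : pred nat) (A : seq nat) :
  count Q s = count (fun z => Q z && (z \notin A)) s + count (fun z => Q z && (z \in A)) s.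
Proof. elim: s => //= z s ->; case: (Q z); case: (z \in A) => /=; lia. Qed.

Definition pairs_ok (Y : symbol) (pr : nat * nat) :=
  [&& pr.1 \in Y.1, pr.1 \notin Y.2, pr.2 \in Y.2 & pr.2 \notin Y.1].

Lemma fcnt_pair_step Y u v N t : uniq Y.1 -> uniq Y.2 -> pairs_ok Y (u, v) ->
  u \notin N -> v \notin N ->
  fcnt Y (u :: v :: N) t + (t <= u) = fcnt Y N t + (t <= v).
Proof.
move=> u1 u2 /and4P[up uq vq vp] uN vN; rewrite /fcnt.
rewrite [count (fun z => (t <= z) && (z \notin N)) Y.1]
  (count_memsplit _ (fun z => (t <= z) && (z \notin N)) [:: u; v]).
rewrite [count (fun z => (t <= z) && (z \in u :: v :: N)) Y.2]
  (count_memsplit _ (fun z => (t <= z) && (z \in u :: v :: N)) N).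
have E1 : count (fun z => (t <= z) && (z \notin u :: v :: N)) Y.1 =
          count (fun z => ((t <= z) && (z \notin N)) && (z \notin [:: u; v])) Y.1.
  apply: eq_count => z; rewrite !in_cons in_nil !negb_or; by case: (z == u); case: (z == v); case: (z \in N); rewrite ?andbF ?andbT.
have E2 : count (fun z => ((t <= z) && (z \notin N)) && (z \in [:: u; v])) Y.1 = (t <= u).
  rewrite (@eq_in_count _ _ (fun z => (z == u) && (t <= z))); last first.
    move=> z zp; rewrite !in_cons in_nil orbF; case: (eqVneq z u) => [->|ne] /=; first by rewrite uN !andbT.
    case: (eqVneq z v) => [e|_] /=; last by rewrite andbF.
    by move: vp; rewrite -e zp.
  by rewrite count_eq_uniq // up.
have E3 : count (fun z => ((t <= z) && (z \in u :: v :: N)) && (z \in N)) Y.2 =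
          count (fun z => (t <= z) && (z \in N)) Y.2.
  apply: eq_count => z; rewrite !in_cons; by case: (z \in N); rewrite ?orbT ?andbF ?andbT.
have E4 : count (fun z => ((t <= z) && (z \in u :: v :: N)) && (z \notin N)) Y.2 = (t <= v).
  rewrite (@eq_in_count _ _ (fun z => (z == v) && (t <= z))); last first.
    move=> z zq; rewrite !in_cons; case: (eqVneq z v) => [->|ne] /=.
      by rewrite vN orbT !andbT.
    case: (eqVneq z u) => [e|_] /=; last by case: (z \in N); rewrite ?andbF.
    by move: uq; rewrite -e zq.
  by rewrite count_eq_uniq // vq.
rewrite E1 E2 E3 E4; move: (t <= u) (t <= v) => a b. rewrite -!addnA; congr (_ + _). by rewrite addnCA [in RHS]addnCA [b + a]addnC.
Qed.

Lemma fcnt_nil Y t : fcnt Y [::] t = cnt Y.1 t.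
Proof.
rewrite /fcnt /cnt addnC; have -> : count (fun z => (t <= z) && (z \in [::])) Y.2 = 0.
  by apply/eqP; rewrite -leqn0 leqNgt -has_count; apply/hasPn => z _; rewrite in_nil andbF.
by rewrite add0n; apply: eq_count => z; rewrite in_nil andbT.
Qed.

Lemma fcnt_pair Y u v t : uniq Y.1 -> uniq Y.2 -> pairs_ok Y (u, v) ->
  fcnt Y [:: u; v] t + (t <= u) = cnt Y.1 t + (t <= v).
Proof. by move=> u1 u2 h; rewrite (fcnt_pair_step t u1 u2 h) // fcnt_nil. Qed.

Lemma pairs_union_cons pr P : pairs_union (pr :: P) = pr.1 :: pr.2 :: pairs_union P.
Proof. by []. Qed.

Lemma mem_pairs_union z P : (z \in pairs_union P) = has (fun pr : nat * nat => (z == pr.1) || (z == pr.2)) P.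
Proof. elim: P => //= pr P IH; by rewrite !in_cons IH orbA. Qed.

Lemma union_out Y P t : uniq Y.1 -> uniq Y.2 -> all (pairs_ok Y) P -> uniq (pairs_union P) ->
  (forall pr, pr \in P -> (t <= pr.1) = (t <= pr.2)) -> fcnt Y (pairs_union P) t = cnt Y.1 t.
Proof.
move=> u1 u2; elim: P => [|[u v] P IH] /=; first by rewrite fcnt_nil.
move=> /andP[hok hall] /and3P[hu hv hun] hin.
rewrite !in_cons negb_or in hu; move: hu => /andP[_ hu].
have := fcnt_pair_step t u1 u2 hok hu hv.
rewrite IH // => [|pr hpr]; last by apply: hin; rewrite in_cons hpr orbT.
have := hin (u, v); rewrite in_cons eqxx /= => /(_ isT) ->.
by move=> /eqP; rewrite eqn_add2r => /eqP.
Qed.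

Lemma union_in Y P t pr0 : uniq Y.1 -> uniq Y.2 -> all (pairs_ok Y) P -> uniq (pairs_union P) ->
  pr0 \in P -> (forall pr, pr \in P -> pr != pr0 -> (t <= pr.1) = (t <= pr.2)) ->
  fcnt Y (pairs_union P) t = fcnt Y [:: pr0.1; pr0.2] t.
Proof.
move=> u1 u2; elim: P => [|[u v] P IH] //=.
move=> /andP[hok hall] /and3P[hu hv hun] hp0 hin.
rewrite -/(pairs_union P) in hu hv hun *.
rewrite !in_cons negb_or in hu; move: hu => /andP[_ hu].
have step := fcnt_pair_step t u1 u2 hok hu hv.
case: (eqVneq (u, v) pr0) => [e|ne].
- have hp0P : pr0 \notin P.
    apply/negP => h; move: hu; rewrite mem_pairs_union => /hasP; apply; exists pr0 => //.
    by rewrite -e eqxx.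
  rewrite -e /=.
  have h1 : fcnt Y (pairs_union P) t = cnt Y.1 t.
    apply: union_out => // pr hpr; apply: hin; first by rewrite in_cons hpr orbT.
    by apply/eqP => e2; move: hp0P; rewrite -e2 hpr.
  have := fcnt_pair t u1 u2 hok; rewrite -h1 -step => /eqP; rewrite eqn_add2r => /eqP //.
- move: hp0; rewrite in_cons eq_sym (negbTE ne) /= => hp0.
  have hh := hin (u, v); rewrite in_cons eqxx /= in hh; have := hh isT ne.
  move=> huv; rewrite -IH //.
    by move: step; rewrite huv => /eqP; rewrite eqn_add2r => /eqP.
  move=> pr hpr; apply: hin; by rewrite in_cons hpr orbT.
Qed.

Definition Fc (Y : symbol) t := cnt Y.1 t + cnt Y.2 t.

Record Vgood (Y : symbol) (V : nat -> nat -> Prop) : Prop := VG {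
  vg0 : forall t, V t (cnt Y.1 t);
  vgw : forall t k k', V t k -> V t k' -> k <= k' + 1;
  vgkm : forall t k k', V t k -> k + 1 = cnt Y.1 t -> V t.+1 k' -> k' + 1 = cnt Y.1 t.+1 ->
           Fc Y t = Fc Y t.+1;
  vgkp : forall t, V t (cnt Y.1 t + 1) -> V t.+1 (cnt Y.1 t.+1 + 1) -> Fc Y t = Fc Y t.+1;
  vgdp : forall t k, t \in Y.1 -> V t k -> k + 1 = cnt Y.1 t -> V t.+1 (cnt Y.1 t.+1 + 1) -> False;
  vgdq : forall t k', t \in Y.2 -> V t (cnt Y.1 t + 1) -> V t.+1 k' -> k' + 1 = cnt Y.1 t.+1 -> False
}.

Definition nobetween (Y : symbol) u v := forall z, ent Y z -> ~ (minn u v < z < maxn u v).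

Definition pok (Y : symbol) V (pr : nat * nat) : Prop :=
  [/\ pairs_ok Y pr, nobetween Y pr.1 pr.2 & forall t, V t (fcnt Y [:: pr.1; pr.2] t)].

Lemma nobetween_sym Y u v : nobetween Y u v -> nobetween Y v u.
Proof. by move=> h z ez; rewrite minnC maxnC; exact: h. Qed.

Lemma adj_same_side Y u v v' : ent Y v -> ent Y v' -> v != v' ->
  nobetween Y u v -> nobetween Y u v' ->
  (v < u /\ v' < u) \/ (u < v /\ u < v') -> False.
Proof.
move=> ev ev' ne h1 h2 hh; move: ne; rewrite neq_ltn => /orP[] lt.
- case: hh => -[a b].
  + by apply: (h1 v' ev'); lia.
  + by apply: (h2 v ev); lia.
- case: hh => -[a b].
  + by apply: (h2 v ev); lia.
  + by apply: (h1 v' ev'); lia.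
Qed.

Lemma pv_up Y u v t : uniq Y.1 -> uniq Y.2 -> pairs_ok Y (u, v) ->
  u < t -> t <= v -> fcnt Y [:: u; v] t = cnt Y.1 t + 1.
Proof.
move=> n1 n2 h a b; have := fcnt_pair t n1 n2 h.
by rewrite b (leqNgt t u) a /= addn0.
Qed.

Lemma pv_down Y u v t : uniq Y.1 -> uniq Y.2 -> pairs_ok Y (u, v) ->
  v < t -> t <= u -> fcnt Y [:: u; v] t + 1 = cnt Y.1 t.
Proof.
move=> n1 n2 h a b; have := fcnt_pair t n1 n2 h.
by rewrite b (leqNgt t v) a /= addn0.
Qed.

Lemma pv_out Y u v t : uniq Y.1 -> uniq Y.2 -> pairs_ok Y (u, v) ->
  (t <= u) = (t <= v) -> fcnt Y [:: u; v] t = cnt Y.1 t.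
Proof.
move=> n1 n2 h e; have := fcnt_pair t n1 n2 h.
by rewrite e => /eqP; rewrite eqn_add2r => /eqP.
Qed.

Lemma pok_disj Y V u v u' v' : ispec Y -> Vgood Y V -> pok Y V (u, v) -> pok Y V (u', v') ->
  (u, v) != (u', v') -> [&& u != u', v != v', u != v' & v != u'].
Proof.
move=> hY hV [hok hb hval] [hok' hb' hval'] ne.
have hok0 := hok; have hok0' := hok'.
move: hok hok' => /and4P[up uq vq vp] /and4P[up' uq' vq' vp'].
rewrite /= in up uq vq vp up' uq' vq' vp' hb hb' hval hval'.
have [g1 g2 n1 n2 _] := ispec_facts hY.
have huv' : u != v' by apply/eqP => e; move: uq; rewrite e vq'.
have hvu' : v != u' by apply/eqP => e; move: vp; rewrite e up'.
have huv : u != v by apply/eqP => e; move: uq; rewrite e vq.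
have huv2 : u' != v' by apply/eqP => e; move: uq'; rewrite e vq'.
rewrite huv' hvu' !andbT.
case: (eqVneq u u') => [e|neu]; last first.
  case: (eqVneq v v') => [e|nev] //=; exfalso.
  subst v'.
  have eu : ent Y u by rewrite /ent up.
  have eu' : ent Y u' by rewrite /ent up'.
  have [ltu|ltu] : (u < v) \/ (v < u) by move: huv; rewrite neq_ltn => /orP[]; [left|right].
  - have [ltu'|ltu'] : (u' < v) \/ (v < u') by move: huv2; rewrite neq_ltn => /orP[]; [left|right].
    + exact: (adj_same_side eu eu' neu (nobetween_sym hb) (nobetween_sym hb') (or_introl (conj ltu ltu'))).
    +
      have h1 := hval v; rewrite (pv_up n1 n2 hok0) // in h1.
      have h2 := hval' v.+1.
      exact: (vgdq hV vq h1 h2 (pv_down n1 n2 hok0' (ltnSn v) ltu')).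
  - have [ltu'|ltu'] : (u' < v) \/ (v < u') by move: huv2; rewrite neq_ltn => /orP[]; [left|right].
    +
      have h1 := hval' v; rewrite (pv_up n1 n2 hok0') // in h1.
      have h2 := hval v.+1.
      exact: (vgdq hV vq h1 h2 (pv_down n1 n2 hok0 (ltnSn v) ltu)).
    + exact: (adj_same_side eu eu' neu (nobetween_sym hb) (nobetween_sym hb') (or_intror (conj ltu ltu'))).
subst u'; have nev : v != v' by apply: contraNneq ne => ->.
exfalso.
have ev : ent Y v by rewrite /ent vq orbT.
have ev' : ent Y v' by rewrite /ent vq' orbT.
have [ltu|ltu] : (u < v) \/ (v < u) by move: huv; rewrite neq_ltn => /orP[]; [left|right].
- have [ltu'|ltu'] : (u < v') \/ (v' < u) by move: huv2; rewrite neq_ltn => /orP[]; [left|right].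
  + exact: (adj_same_side ev ev' nev hb hb' (or_intror (conj ltu ltu'))).
  +
    have h1 := hval' u; have h2 := hval u.+1; rewrite (pv_up n1 n2 hok0) // in h2.
    exact: (vgdp hV up h1 (pv_down n1 n2 hok0' ltu' (leqnn u)) h2).
- have [ltu'|ltu'] : (u < v') \/ (v' < u) by move: huv2; rewrite neq_ltn => /orP[]; [left|right].
  +
    have h1 := hval u; have h2 := hval' u.+1; rewrite (pv_up n1 n2 hok0') // in h2.
    exact: (vgdp hV up h1 (pv_down n1 n2 hok0 ltu (leqnn u)) h2).
  + exact: (adj_same_side ev ev' nev hb hb' (or_introl (conj ltu ltu'))).
Qed.



Lemma nb1 Y u v z : nobetween Y u v -> ent Y z -> u < z -> z < v -> False.
Proof. move=> h ez a b; apply: (h z ez); rewrite (minn_idPl (ltnW (ltn_trans a b))) (maxn_idPr (ltnW (ltn_trans a b))) a b. by []. Qed.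
Lemma nb2 Y u v z : nobetween Y u v -> ent Y z -> v < z -> z < u -> False.
Proof. move=> h; apply: nb1; exact: nobetween_sym. Qed.

Lemma pok_itv Y V u v u' v' t : ispec Y -> Vgood Y V -> pok Y V (u, v) -> pok Y V (u', v') ->
  (u, v) != (u', v') -> (t <= u) != (t <= v) -> (t <= u') = (t <= v').
Proof.
move=> hY hV h h' ne.
have /and4P[d1 d2 d3 d4] := pok_disj hY hV h h' ne.
move: h h' => [/and4P[up uq vq vp] hb _] [/and4P[up' uq' vq' vp'] hb' _].
rewrite /= in up uq vq vp up' uq' vq' vp' hb hb'.
have e1 : ent Y u by rewrite /ent up.
have e2 : ent Y v by rewrite /ent vq orbT.
have e3 : ent Y u' by rewrite /ent up'.
have e4 : ent Y v' by rewrite /ent vq' orbT.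
case: (leqP t u) => a; case: (leqP t v) => b //= _;
case: (leqP t u') => c; case: (leqP t v') => d //=; exfalso.
- move: d1; rewrite neq_ltn => /orP[lt|lt].
  + apply: (nb2 hb' e1); clear -a b c d lt; lia.
  + apply: (nb2 hb e3); clear -a b c d lt; lia.
- move: d3; rewrite neq_ltn => /orP[lt|lt].
  + apply: (nb1 hb' e1); clear -a b c d lt; lia.
  + apply: (nb2 hb e4); clear -a b c d lt; lia.
- move: d4; rewrite neq_ltn => /orP[lt|lt].
  + apply: (nb2 hb' e2); clear -a b c d lt; lia.
  + apply: (nb1 hb e3); clear -a b c d lt; lia.
- move: d2; rewrite neq_ltn => /orP[lt|lt].
  + apply: (nb1 hb' e2); clear -a b c d lt; lia.
  + apply: (nb1 hb e4); clear -a b c d lt; lia.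
Qed.

Lemma uniq_union Y V P : ispec Y -> Vgood Y V -> uniq P -> (forall pr, pr \in P -> pok Y V pr) ->
  uniq (pairs_union P).
Proof.
move=> hY hV; elim: P => [|[u v] P IH] //= /andP[hn hu] hall.
rewrite -/(pairs_union P).
have hpr : pok Y V (u, v) by apply: hall; rewrite in_cons eqxx.
have [/and4P[up uq vq vp] _ _] := hpr.
rewrite /= in up uq vq vp.
rewrite IH //; last by move=> pr hpr'; apply: hall; rewrite in_cons hpr' orbT.
rewrite in_cons negb_or andbT.
have -> : u != v by apply/eqP => e; move: uq; rewrite e vq.
rewrite /= !mem_pairs_union; apply/andP; split; apply/hasPn => -[u' v'] hp /=.
- have ne : (u, v) != (u', v') by apply: contraNneq hn => ->.
  have /and4P[? ? ? ?] := pok_disj hY hV hpr (hall (u', v') (mem_behead (s := (u, v) :: P) hp)) ne.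
  by rewrite negb_or; apply/andP; split.
- have ne : (u, v) != (u', v') by apply: contraNneq hn => ->.
  have /and4P[? ? ? ?] := pok_disj hY hV hpr (hall (u', v') (mem_behead (s := (u, v) :: P) hp)) ne.
  by rewrite negb_or; apply/andP; split.
Qed.

Lemma max_below (Pr : pred nat) x : (exists2 z, z < x & Pr z) ->
  exists y, [/\ y < x, Pr y & forall z, y < z -> z < x -> ~~ Pr z].
Proof.
elim: x => [[z]|x IH [z zx pz]] //.
case hx: (Pr x).
- exists x; split=> // w a b; exfalso; move: a b; clear; lia.
- have zx' : z < x by move: zx; rewrite ltnS leq_eqVlt => /orP[/eqP e|] //; move: pz; rewrite e hx.
  have [y [yx py hy]] := IH (ex_intro2 _ _ z zx' pz).
  exists y; split=> //; first by apply: leq_trans yx _.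
  move=> w a b; move: b; rewrite ltnS leq_eqVlt => /orP[/eqP ->|b]; first by rewrite hx.
  exact: hy.
Qed.

Lemma min_above (Pr : pred nat) x : (exists2 z, x < z & Pr z) ->
  exists y, [/\ x < y, Pr y & forall z, x < z -> z < y -> ~~ Pr z].
Proof.
move=> [z xz pz].
have ex : exists n, (x < n) && Pr n by exists z; rewrite xz pz.
case: (ex_minnP ex) => y /andP[xy py] hmin.
exists y; split=> // w a b; apply/negP => pw.
have := hmin w; rewrite a pw => /(_ isT); move: b; clear; lia.
Qed.

Lemma count_const (s : seq nat) (Q : pred nat) lo hi t :
  (forall z, z \in s -> lo <= z -> z < hi -> False) -> lo <= t -> t <= hi ->
  count (fun z => (t <= z) && Q z) s = count (fun z => (hi <= z) && Q z) s.
Proof.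
move=> h a b; apply: eq_in_count => z zs /=; congr (_ && _).
case: (leqP hi z) => c; first by rewrite (leq_trans b c).
case: (leqP lo z) => d; first by exfalso; exact: h zs d c.
apply/negbTE; rewrite -ltnNge; exact: leq_trans d a.
Qed.

Lemma cnt_const (s : seq nat) lo hi t :
  (forall z, z \in s -> lo <= z -> z < hi -> False) -> lo <= t -> t <= hi ->
  cnt s t = cnt s hi.
Proof.
move=> h a b; have := count_const predT h a b; rewrite /cnt.
have E (u : nat) : count (fun z => (u <= z) && predT z) s = count (fun z => u <= z) s.
  by apply: eq_count => z; rewrite andbT.
by rewrite !E.
Qed.

Lemma count_zero (s : seq nat) (Q : pred nat) t :
  (forall z, z \in s -> z < t) -> count (fun z => (t <= z) && Q z) s = 0.
Proof.
move=> h; apply/eqP; rewrite -leqn0 leqNgt -has_count; apply/hasPn => z zs.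
by rewrite leqNgt (h z zs).
Qed.

Lemma cnt_zero (s : seq nat) t : (forall z, z \in s -> z < t) -> cnt s t = 0.
Proof.
move=> h; apply/eqP; rewrite -leqn0 leqNgt -has_count; apply/hasPn => z zs.
by rewrite leqNgt (h z zs).
Qed.

Lemma fcnt_const Y M lo hi t :
  (forall z, ent Y z -> lo <= z -> z < hi -> False) -> lo <= t -> t <= hi ->
  fcnt Y M t = fcnt Y M hi /\ cnt Y.1 t = cnt Y.1 hi.
Proof.
move=> h a b.
have h1 : forall z, z \in Y.1 -> lo <= z -> z < hi -> False by move=> z zs; apply: h; rewrite /ent zs.
have h2 : forall z, z \in Y.2 -> lo <= z -> z < hi -> False by move=> z zs; apply: h; rewrite /ent zs orbT.
rewrite /fcnt (count_const _ h1 a b) (count_const _ h2 a b); split=> //.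
exact: cnt_const h1 a b.
Qed.

Lemma fcnt_zero Y M t : (forall z, ent Y z -> z < t) -> fcnt Y M t = 0 /\ cnt Y.1 t = 0.
Proof.
move=> h.
have h1 : forall z, z \in Y.1 -> z < t by move=> z zs; apply: h; rewrite /ent zs.
have h2 : forall z, z \in Y.2 -> z < t by move=> z zs; apply: h; rewrite /ent zs orbT.
by rewrite /fcnt (count_zero _ h1) (count_zero _ h2) (cnt_zero h1).
Qed.

Lemma singlesP Y z : z \in singles Y -> ((z \in Y.1) && (z \notin Y.2)) || ((z \in Y.2) && (z \notin Y.1)).
Proof.
rewrite /singles mem_filter mem_cat => /andP[]; case: (z \in Y.1); case: (z \in Y.2) => //.
Qed.

Lemma Fc_step Y t : uniq Y.1 -> uniq Y.2 -> Fc Y t = Fc Y t.+1 + (t \in Y.1) + (t \in Y.2).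
Proof. by move=> u1 u2; rewrite /Fc (cnt_step t u1) (cnt_step t u2) addnACA !addnA. Qed.


Definition Mctx (Y : symbol) V (M : seq nat) :=
  [/\ ispec Y, Vgood Y V, {subset M <= singles Y}, fcnt Y M 0 = cnt Y.1 0 &
      forall t, V t (fcnt Y M t)].

Lemma ctx_facts Y V M : Mctx Y V M ->
  [/\ (forall t, fcnt Y M t = fcnt Y M t.+1 + ((t \in Y.1) && (t \notin M)) + ((t \in Y.2) && (t \in M))),
      (forall t, cnt Y.1 t = cnt Y.1 t.+1 + (t \in Y.1)),
      (forall t, Fc Y t = Fc Y t.+1 + (t \in Y.1) + (t \in Y.2)) &
      (forall t, fcnt Y M t <= cnt Y.1 t + 1 /\ cnt Y.1 t <= fcnt Y M t + 1)].
Proof.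
move=> [hY hV hM h0 hval]; have [_ _ u1 u2 _] := ispec_facts hY.
split=> t; [exact: fcnt_step|exact: cnt_step|exact: Fc_step|].
split; apply: (vgw hV); [exact: hval|exact: vg0|exact: vg0|exact: hval].
Qed.

Lemma below_exists Y M x : fcnt Y M 0 = cnt Y.1 0 -> fcnt Y M x != cnt Y.1 x ->
  exists y, [/\ y < x, ent Y y & forall z, ent Y z -> y < z -> z < x -> False].
Proof.
move=> h0 hx.
have [y [yx ey hy]] : exists y, [/\ y < x, ent Y y & forall z, y < z -> z < x -> ~~ ent Y z].
  apply: max_below; apply: NNPP => hn.
  have hc : forall z, ent Y z -> 0 <= z -> z < x -> False.
    by move=> z ez _ zx; apply: hn; exists z.
  have [e1 e2] := fcnt_const M hc (leqnn 0) (leq0n x).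
  by move: hx; rewrite -e1 -e2 h0 eqxx.
exists y; split=> // z ez a b; by move: (hy z a b); rewrite ez.
Qed.

Lemma above_exists Y M x : fcnt Y M x.+1 != cnt Y.1 x.+1 ->
  exists y, [/\ x < y, ent Y y & forall z, ent Y z -> x < z -> z < y -> False].
Proof.
move=> hx.
have [y [yx ey hy]] : exists y, [/\ x < y, ent Y y & forall z, x < z -> z < y -> ~~ ent Y z].
  apply: min_above; apply: NNPP => hn.
  have hc : forall z, ent Y z -> z < x.+1.
    move=> z ez; rewrite ltnNge; apply/negP => zx; apply: hn; by exists z.
  have [e1 e2] := fcnt_zero M hc.
  by move: hx; rewrite e1 e2 eqxx.
exists y; split=> // z ez a b; by move: (hy z a b); rewrite ez.
Qed.

Lemma ent_Fc Y y : uniq Y.1 -> uniq Y.2 -> ent Y y -> Fc Y y = Fc Y y.+1 -> False.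
Proof.
move=> u1 u2; rewrite /ent (Fc_step y u1 u2).
case: (y \in Y.1); case: (y \in Y.2) => //= _; clear; lia.
Qed.

Ltac clean_lia := repeat match goal with
  | h : is_true (_ \in _) |- _ => clear h
  | h : is_true (~~ (_ \in _)) |- _ => clear h
  | h : forall _, _ |- _ => clear h
  | h : ispec _ |- _ => clear h
  | h : Vgood _ _ |- _ => clear h
  | h : Mctx _ _ _ |- _ => clear h
  | h : {subset _ <= _} |- _ => clear h
  end; lia.

Lemma down_minus Y V M x : Mctx Y V M -> fcnt Y M x + 1 = cnt Y.1 x ->
  exists y, [/\ y < x, y \in M, (y \in Y.2) && (y \notin Y.1),
    (forall z, ent Y z -> y < z -> z < x -> False) &
    forall t, y < t -> t <= x -> fcnt Y M t + 1 = cnt Y.1 t].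
Proof.
move=> hC hx; have [hY hV hM h0 hval] := hC; have [fst Pst Fst wd] := ctx_facts hC.
have [_ _ u1 u2 _] := ispec_facts hY.
have hne : fcnt Y M x != cnt Y.1 x by apply/eqP => e; move: hx; rewrite e; clear; lia.
have [y [yx ey hy]] := below_exists h0 hne.
have cst : forall t, y < t -> t <= x -> fcnt Y M t = fcnt Y M x /\ cnt Y.1 t = cnt Y.1 x.
  by move=> t a b; apply: fcnt_const a b.
have [c1 c2] := cst y.+1 (ltnSn y) yx.
have fy := fst y; have py := Pst y; have wy := wd y.
case yM: (y \in M); last first.
  exfalso; rewrite yM /= andbT andbF addn0 in fy.
  apply: (ent_Fc u1 u2 ey); apply: (vgkm hV (hval y) _ (hval y.+1)).
  - by move: fy py; case: (y \in Y.1) => /= fy py; clean_lia.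
  - by clean_lia.
have := singlesP (hM y yM) => /orP[/andP[yp yq]|/andP[yq yp]].
- exfalso; rewrite yM yp (negbTE yq) /= addn0 in fy; rewrite yp in py.
  by simpl in py; clean_lia.
- exists y; split=> //; first by rewrite yq.
  move=> t a b; have [d1 d2] := cst t a b; clean_lia.
Qed.

Lemma down_plus Y V M x : Mctx Y V M -> fcnt Y M x = cnt Y.1 x + 1 ->
  exists y, [/\ y < x, y \in M, (y \in Y.1) && (y \notin Y.2),
    (forall z, ent Y z -> y < z -> z < x -> False) &
    forall t, y < t -> t <= x -> fcnt Y M t = cnt Y.1 t + 1].
Proof.
move=> hC hx; have [hY hV hM h0 hval] := hC; have [fst Pst Fst wd] := ctx_facts hC.
have [_ _ u1 u2 _] := ispec_facts hY.
have hne : fcnt Y M x != cnt Y.1 x by apply/eqP => e; move: hx; rewrite e; clear; lia.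
have [y [yx ey hy]] := below_exists h0 hne.
have cst : forall t, y < t -> t <= x -> fcnt Y M t = fcnt Y M x /\ cnt Y.1 t = cnt Y.1 x.
  by move=> t a b; apply: fcnt_const a b.
have [c1 c2] := cst y.+1 (ltnSn y) yx.
have fy := fst y; have py := Pst y; have wy := wd y.
case yM: (y \in M); last first.
  exfalso; rewrite yM /= andbT andbF addn0 in fy.
  have e1 : fcnt Y M y = cnt Y.1 y + 1.
    by move: fy py; case: (y \in Y.1) => /= fy py; clean_lia.
  have e2 : fcnt Y M y.+1 = cnt Y.1 y.+1 + 1 by clean_lia.
  have h1 := hval y; have h2 := hval y.+1; rewrite e1 in h1; rewrite e2 in h2.
  exact: (ent_Fc u1 u2 ey (vgkp hV h1 h2)).
have := singlesP (hM y yM) => /orP[/andP[yp yq]|/andP[yq yp]].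
- exists y; split=> //; first by rewrite yp.
  move=> t a b; have [d1 d2] := cst t a b; clean_lia.
- exfalso; rewrite yM yq (negbTE yp) /= in fy; rewrite (negbTE yp) in py.
  by simpl in py; clean_lia.
Qed.

Lemma up_minus Y V M x : Mctx Y V M -> fcnt Y M x.+1 + 1 = cnt Y.1 x.+1 ->
  exists z, [/\ x < z, z \in M, (z \in Y.1) && (z \notin Y.2),
    (forall w, ent Y w -> x < w -> w < z -> False) &
    forall t, x < t -> t <= z -> fcnt Y M t + 1 = cnt Y.1 t].
Proof.
move=> hC hx; have [hY hV hM h0 hval] := hC; have [fst Pst Fst wd] := ctx_facts hC.
have [_ _ u1 u2 _] := ispec_facts hY.
have hne : fcnt Y M x.+1 != cnt Y.1 x.+1 by apply/eqP => e; move: hx; rewrite e; clear; lia.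
have [z [xz ez hz]] := above_exists hne.
have cst : forall t, x < t -> t <= z -> fcnt Y M t = fcnt Y M z /\ cnt Y.1 t = cnt Y.1 z.
  by move=> t a b; apply: fcnt_const a b.
have [c1 c2] := cst x.+1 (ltnSn x) xz.
have fz := fst z; have pz := Pst z; have wz := wd z.+1.
case zM: (z \in M); last first.
  exfalso; rewrite zM /= andbT andbF addn0 in fz.
  apply: (ent_Fc u1 u2 ez); apply: (vgkm hV (hval z) _ (hval z.+1)).
  - by clean_lia.
  - by move: fz pz; case: (z \in Y.1) => /= fz pz; clean_lia.
have := singlesP (hM z zM) => /orP[/andP[zp zq]|/andP[zq zp]].
- exists z; split=> //; first by rewrite zp.
  move=> t a b; have [d1 d2] := cst t a b; clean_lia.
- exfalso; rewrite zM zq (negbTE zp) /= in fz; rewrite (negbTE zp) in pz.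
  by simpl in pz; clean_lia.
Qed.

Lemma up_plus Y V M x : Mctx Y V M -> fcnt Y M x.+1 = cnt Y.1 x.+1 + 1 ->
  exists z, [/\ x < z, z \in M, (z \in Y.2) && (z \notin Y.1),
    (forall w, ent Y w -> x < w -> w < z -> False) &
    forall t, x < t -> t <= z -> fcnt Y M t = cnt Y.1 t + 1].
Proof.
move=> hC hx; have [hY hV hM h0 hval] := hC; have [fst Pst Fst wd] := ctx_facts hC.
have [_ _ u1 u2 _] := ispec_facts hY.
have hne : fcnt Y M x.+1 != cnt Y.1 x.+1 by apply/eqP => e; move: hx; rewrite e; clear; lia.
have [z [xz ez hz]] := above_exists hne.
have cst : forall t, x < t -> t <= z -> fcnt Y M t = fcnt Y M z /\ cnt Y.1 t = cnt Y.1 z.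
  by move=> t a b; apply: fcnt_const a b.
have [c1 c2] := cst x.+1 (ltnSn x) xz.
have fz := fst z; have pz := Pst z; have wz := wd z.+1.
case zM: (z \in M); last first.
  exfalso; rewrite zM /= andbT andbF addn0 in fz.
  have e1 : fcnt Y M z = cnt Y.1 z + 1 by clean_lia.
  have e2 : fcnt Y M z.+1 = cnt Y.1 z.+1 + 1.
    by move: fz pz; case: (z \in Y.1) => /= fz pz; clean_lia.
  have h1 := hval z; have h2 := hval z.+1; rewrite e1 in h1; rewrite e2 in h2.
  exact: (ent_Fc u1 u2 ez (vgkp hV h1 h2)).
have := singlesP (hM z zM) => /orP[/andP[zp zq]|/andP[zq zp]].
- exfalso; rewrite zM zp (negbTE zq) /= addn0 in fz; rewrite zp in pz.
  by simpl in pz; clean_lia.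
- exists z; split=> //; first by rewrite zq.
  move=> t a b; have [d1 d2] := cst t a b; clean_lia.
Qed.

Lemma nb_intro Y lo hi : lo < hi -> (forall w, ent Y w -> lo < w -> w < hi -> False) ->
  nobetween Y lo hi /\ nobetween Y hi lo.
Proof.
move=> lt h; have l2 := ltnW lt.
have E : nobetween Y lo hi.
  move=> z ez; rewrite (minn_idPl l2) (maxn_idPr l2) => /andP[a b]; exact: h ez a b.
by split=> //; apply: nobetween_sym.
Qed.

Lemma pok_of Y V M u v : Mctx Y V M -> pairs_ok Y (u, v) -> nobetween Y u v ->
  (forall t, minn u v < t -> t <= maxn u v -> fcnt Y M t + (t <= u) = cnt Y.1 t + (t <= v)) ->
  pok Y V (u, v).
Proof.
move=> hC hok hb h; have [hY hV hM h0 hval] := hC; have [_ _ u1 u2 _] := ispec_facts hY.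
split=> // t /=.
case e: ((t <= u) == (t <= v)).
  rewrite (pv_out u1 u2 hok (eqP e)); exact: vg0.
have [a b] : minn u v < t /\ t <= maxn u v.
  move: e; case: (leqP t u) => c; case: (leqP t v) => d //= _; split; clear -c d; lia.
have := h t a b; have := fcnt_pair t u1 u2 hok => e1 e2.
have -> : fcnt Y [:: u; v] t = fcnt Y M t.
  by move: e1; rewrite -e2 => /eqP; rewrite eqn_add2r => /eqP.
exact: hval.
Qed.

Lemma partner Y V M x : Mctx Y V M -> x \in M ->
  exists u v, [/\ pok Y V (u, v), u \in M, v \in M & (x == u) || (x == v)].
Proof.
move=> hC xM; have [hY hV hM h0 hval] := hC; have [fst Pst Fst wd] := ctx_facts hC.
have fx := fst x; have px := Pst x; have wx := wd x; have wx1 := wd x.+1.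
have := singlesP (hM x xM) => /orP[/andP[xp xq]|/andP[xq xp]].
- rewrite xM xp (negbTE xq) /= !addn0 in fx; rewrite xp /= in px.
  case e: (fcnt Y M x.+1 == cnt Y.1 x.+1); move/eqP: e => e.
  + have hx : fcnt Y M x + 1 = cnt Y.1 x by clean_lia.
    have [y [yx yM /andP[yq yp] hy hi]] := down_minus hC hx.
    exists x, y; split=> //; last by rewrite eqxx.
    have [_ nb] := nb_intro yx hy.
    apply: (pok_of hC) => //; first by rewrite /pairs_ok /= xp xq yq yp.
    move=> t; rewrite (minn_idPr (ltnW yx)) (maxn_idPl (ltnW yx)) => a b.
    by rewrite b (leqNgt t y) a /= (hi t a b) ?addn0.
  + have hx : fcnt Y M x.+1 = cnt Y.1 x.+1 + 1 by clean_lia.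
    have [z [xz zM /andP[zq zp] hz hi]] := up_plus hC hx.
    exists x, z; split=> //; last by rewrite eqxx.
    have [nb _] := nb_intro xz hz.
    apply: (pok_of hC) => //; first by rewrite /pairs_ok /= xp xq zq zp.
    move=> t; rewrite (minn_idPl (ltnW xz)) (maxn_idPr (ltnW xz)) => a b.
    by rewrite b (leqNgt t x) a /= (hi t a b) ?addn0.
- rewrite xM xq (negbTE xp) /= addn0 in fx; rewrite (negbTE xp) /= addn0 in px.
  case e: (fcnt Y M x.+1 == cnt Y.1 x.+1); move/eqP: e => e.
  + have hx : fcnt Y M x = cnt Y.1 x + 1 by clean_lia.
    have [y [yx yM /andP[yp yq] hy hi]] := down_plus hC hx.
    exists y, x; split=> //; last by rewrite eqxx orbT.
    have [nb _] := nb_intro yx hy.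
    apply: (pok_of hC) => //; first by rewrite /pairs_ok /= xp xq yq yp.
    move=> t; rewrite (minn_idPl (ltnW yx)) (maxn_idPr (ltnW yx)) => a b.
    by rewrite b (leqNgt t y) a /= (hi t a b) ?addn0.
  + have hx : fcnt Y M x.+1 + 1 = cnt Y.1 x.+1 by clean_lia.
    have [z [xz zM /andP[zp zq] hz hi]] := up_minus hC hx.
    exists z, x; split=> //; last by rewrite eqxx orbT.
    have [_ nb] := nb_intro xz hz.
    apply: (pok_of hC) => //; first by rewrite /pairs_ok /= xp xq zq zp.
    move=> t; rewrite (minn_idPr (ltnW xz)) (maxn_idPl (ltnW xz)) => a b.
    by rewrite b (leqNgt t x) a /= (hi t a b) ?addn0.
Qed.


Definition validY (Y : symbol) V (L : symbol) :=
  Sbar Y L /\ defect L = defect Y /\ forall t, V t (cnt L.1 t).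

Lemma moveM_ext Y M N : (forall z, z \in Y.1 ++ Y.2 -> (z \in M) = (z \in N)) ->
  moveM Y M = moveM Y N.
Proof.
move=> h; rewrite /moveM.
have h1 : forall z, z \in Y.1 -> (z \in M) = (z \in N) by move=> z zs; apply: h; rewrite mem_cat zs.
have h2 : forall z, z \in Y.2 -> (z \in M) = (z \in N) by move=> z zs; apply: h; rewrite mem_cat zs orbT.
rewrite (@eq_in_filter _ (fun x => x \notin M) (fun x => x \notin N) Y.1); last by move=> z zs /=; rewrite h1.
rewrite (@eq_in_filter _ (fun x => x \in M) (fun x => x \in N) Y.2); last by move=> z zs /=; rewrite h2.
rewrite (@eq_in_filter _ (fun x => x \notin M) (fun x => x \notin N) Y.2); last by move=> z zs /=; rewrite h2.
rewrite (@eq_in_filter _ (fun x => x \in M) (fun x => x \in N) Y.1); last by move=> z zs /=; rewrite h1.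
by [].
Qed.

Lemma defect_eq Y M : defect (moveM Y M) = defect Y <-> fcnt Y M 0 = cnt Y.1 0.
Proof.
have := cnt_moveM_tot Y M 0; rewrite -cnt_moveM1 !cnt0 /defect => h.
split=> [e|e].
- move: e h; set a := size _; set b := size _; set c := size _; set d := size _; lia.
- move: e h; set a := size _; set b := size _; set c := size _; set d := size _; lia.
Qed.

Theorem generic Y V : ispec Y -> Vgood Y V ->
  exists P0, disj_cons_pairs Y P0 /\
    forall L, validY Y V L <-> exists P, subseq P P0 /\ L = moveM Y (pairs_union P).
Proof.
move=> hY hV; have [g1 g2 u1 u2 _] := ispec_facts hY.
have [P0 [hsub hmem]] := cfilter (pok Y V) [seq (x, y) | x <- Y.1, y <- Y.2].
have uP0 : uniq P0.
  apply: subseq_uniq hsub _; apply: allpairs_uniq => // -[a b] [c d] _ _ /= e; exact: e.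
have pokP0 : forall pr, pr \in P0 -> pok Y V pr by move=> pr /hmem [].
have inP0 : forall u v, pok Y V (u, v) -> (u, v) \in P0.
  move=> u v h; apply/hmem; split=> //; have [/and4P[up _ vq _] _ _] := h.
  exact: allpairs_f.
exists P0; split.
  split; last exact: uniq_union hY hV uP0 pokP0.
  move=> [u v] /pokP0 [/and4P[up uq vq vp] hb _]; exact: adj_cons.
move=> L; split.
- move=> [[M [hMs ->]] [hd hval]].
  have h0 : fcnt Y M 0 = cnt Y.1 0 by apply/defect_eq.
  have hC : Mctx Y V M.
    by split=> // t; rewrite -cnt_moveM1.
  exists [seq pr <- P0 | pr.1 \in M]; split; first exact: filter_subseq.
  apply: moveM_ext => z zs; apply/idP/idP.
  + move=> zM; have [u [v [hp uM vM hz]]] := partner hC zM.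
    rewrite mem_pairs_union; apply/hasP; exists (u, v) => //.
    by rewrite mem_filter /= uM inP0.
  + rewrite mem_pairs_union => /hasP [[u v]]; rewrite mem_filter /= => /andP[uM hin] hz.
    have [u' [v' [hp' uM' vM' hz']]] := partner hC uM.
    have e : (u, v) = (u', v').
      apply/eqP; apply: contraT => ne.
      have /and4P[d1 _ d3 _] := pok_disj hY hV (pokP0 _ hin) hp' ne.
      by move: hz'; rewrite (negbTE d1) (negbTE d3).
    case: e => eu ev; subst u' v'.
    by case/orP: hz => /eqP ->.
- move=> [P [hP ->]].
  have hPP0 : forall pr, pr \in P -> pr \in P0 by move=> pr; apply: mem_subseq.
  have pokP : forall pr, pr \in P -> pok Y V pr by move=> pr /hPP0 /pokP0.
  have uP : uniq P := subseq_uniq hP uP0.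
  have uU : uniq (pairs_union P) := uniq_union hY hV uP pokP.
  have okP : all (pairs_ok Y) P by apply/allP => pr /pokP [].
  have out0 : fcnt Y (pairs_union P) 0 = cnt Y.1 0 by apply: union_out.
  split; last split.
  + exists (pairs_union P); split=> // z; rewrite mem_pairs_union => /hasP [[u v] hin hz].
    have [/and4P[up uq vq vp] _ _] := pokP _ hin.
    rewrite /singles mem_filter mem_cat.
    rewrite /= in up uq vq vp; by case/orP: hz => /eqP ->; [rewrite up (negbTE uq) | rewrite vq (negbTE vp)].
  + exact/defect_eq.
  + move=> t; rewrite cnt_moveM1.
    case: (boolP (has (fun pr : nat * nat => (t <= pr.1) != (t <= pr.2)) P)).
    * move=> /hasP [[u v] hin hi].
      rewrite (union_in u1 u2 okP uU hin); first by have [_ _] := pokP _ hin; apply.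
      move=> [u' v'] hin' ne; rewrite eq_sym in ne.
      exact: (pok_itv hY hV (pokP _ hin) (pokP _ hin') ne hi).
    * move=> /hasPn hn; rewrite (union_out u1 u2 okP uU); first exact: vg0.
      by move=> pr /hn; rewrite negbK => /eqP.
Qed.


Definition Valpha (F g G : nat -> nat) t k :=
  [/\ F t <= g t.+1 + k, g t + k <= F t + 1, G t <= g t + k & g t.+1 + k <= G t.+1 + 1].
Definition Vbeta (F g G : nat -> nat) t k :=
  [/\ F t <= g t + k, g t + k <= G t + 1 &
      forall s, s.+1 = t -> G s <= g s + k /\ g s + k <= F t + 1].

Lemma ptfacts Y t : ispec Y ->
  [/\ cnt Y.2 t <= cnt Y.1 t, cnt Y.1 t <= cnt Y.2 t + 1,
      cnt Y.1 t.+1 <= cnt Y.1 t & cnt Y.2 t.+1 <= cnt Y.2 t].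
Proof.
move=> hY; have [_ _ _ _ h] := ispec_facts hY; have /andP[h1 h2] := h t.
by split=> //; apply: cnt_mono.
Qed.

Lemma step1 Y t : ispec Y -> t \in Y.1 -> cnt Y.1 t = cnt Y.1 t.+1 + 1.
Proof. by move=> hY ht; have [_ _ u1 _ _] := ispec_facts hY; rewrite (cnt_step t u1) ht. Qed.

Ltac pts hY hX t :=
  have := ptfacts t hY; have := ptfacts t.+1 hY; have := ptfacts t.+2 hY;
  have := ptfacts t hX; have := ptfacts t.+1 hX; have := ptfacts t.+2 hX.

Ltac unpack := repeat match goal with
  | h : Valpha _ _ _ _ _ |- _ => rewrite /Valpha /Fc /= in h; case: h => ? ? ? ?
  | h : Vbeta _ _ _ _ _ |- _ => rewrite /Vbeta /Fc /= in h; case: h => ? ? ?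
  | h : _ /\ _ |- _ => case: h => ? ?
  | h : [/\ _, _, _ & _] |- _ => case: h => ? ? ? ?
  end.

Lemma alpha_good Y X :
  ispec Y -> ispec X ->
  (forall t, Fc X t <= Fc Y t + 1 /\ Fc Y t <= Fc X t.+1 + 1) ->
  Vgood Y (Valpha (Fc Y) (cnt X.1) (Fc X)).
Proof.
move=> hY hX hf; rewrite /Fc in hf.
split.
- move=> t; have f1 := hf t; have f3 := hf t.+1.
  pts hY hX t => p1 p2 p3 p4 p5 p6; clear hf; unpack.
  rewrite /Valpha /Fc /=; split; lia.
- move=> t k k' h1 h2.
  pts hY hX t => p1 p2 p3 p4 p5 p6; clear hf; unpack.
  lia.
- move=> t k k' h1 e1 h2 e2.
  have f1 := hf t; have f3 := hf t.+1.
  pts hY hX t => p1 p2 p3 p4 p5 p6; clear hf; unpack.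
  rewrite /Fc; lia.
- move=> t h1 h2.
  have f1 := hf t; have f3 := hf t.+1.
  pts hY hX t => p1 p2 p3 p4 p5 p6; clear hf; unpack.
  rewrite /Fc; lia.
- move=> t k ht h1 e1 h2.
  have s1 := step1 hY ht.
  pts hY hX t => p1 p2 p3 p4 p5 p6; clear hf ht; unpack.
  lia.
- move=> t k' ht h1 h2 e1.
  pts hY hX t => p1 p2 p3 p4 p5 p6; clear hf ht; unpack.
  lia.
Qed.

Lemma beta_good Y X :
  ispec Y -> ispec X ->
  (forall t, Fc Y t <= Fc X t + 1 /\ Fc X t <= Fc Y t.+1 + 1) -> Fc X 0 <= Fc Y 0 ->
  Vgood Y (Vbeta (Fc Y) (cnt X.1) (Fc X)).
Proof.
move=> hY hX hf h00; rewrite /Fc in hf h00.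
split.
- move=> t; rewrite /Vbeta /Fc /=; split.
  + have f1 := hf t; pts hY hX t => p1 p2 p3 p4 p5 p6; clear hf; unpack; lia.
  + have f1 := hf t; pts hY hX t => p1 p2 p3 p4 p5 p6; clear hf; unpack; lia.
  + move=> s <-; have f1 := hf s; have f2 := hf s.+1.
    pts hY hX s => p1 p2 p3 p4 p5 p6; clear hf; unpack; split; lia.
- move=> t k k'; rewrite /Vbeta /Fc /= => -[a1 a2 a3] [b1 b2 b3].
  case: t a1 a2 a3 b1 b2 b3 => [|s] a1 a2 a3 b1 b2 b3.
  + pts hY hX 0 => p1 p2 p3 p4 p5 p6; clear hf a3 b3; unpack; lia.
  + have [a4 a5] := a3 s erefl; have [b4 b5] := b3 s erefl.
    pts hY hX s => p1 p2 p3 p4 p5 p6; clear hf a3 b3; unpack; lia.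
- move=> t k k'; rewrite /Vbeta /Fc /= => -[a1 a2 a3] e1 [b1 b2 b3] e2.
  have [b4 b5] := b3 t erefl; have f1 := hf t; have f2 := hf t.+1.
  pts hY hX t => p1 p2 p3 p4 p5 p6; clear hf a3 b3; unpack; lia.
- move=> t; rewrite /Vbeta /Fc /= => -[a1 a2 a3] [b1 b2 b3].
  have [b4 b5] := b3 t erefl; have f1 := hf t; have f2 := hf t.+1.
  pts hY hX t => p1 p2 p3 p4 p5 p6; clear hf a3 b3; unpack; lia.
- move=> t k ht; rewrite /Vbeta /Fc /= => -[a1 a2 a3] e1 [b1 b2 b3].
  have [b4 b5] := b3 t erefl; have s1 := step1 hY ht.
  pts hY hX t => p1 p2 p3 p4 p5 p6; clear hf a3 b3 ht; unpack; lia.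
- move=> t k' ht; rewrite /Vbeta /Fc /= => -[a1 a2 a3] [b1 b2 b3] e1.
  have [b4 b5] := b3 t erefl.
  pts hY hX t => p1 p2 p3 p4 p5 p6; clear hf a3 b3 ht; unpack; lia.
Qed.


Definition condsA (L L' : symbol) t :=
  [/\ cnt L'.2 t <= cnt L.1 t.+1, cnt L.1 t <= cnt L'.2 t + 1,
      cnt L'.1 t <= cnt L.2 t.+1 + 1 & cnt L.2 t <= cnt L'.1 t].
Definition condsB (L L' : symbol) t :=
  [/\ cnt L'.2 t <= cnt L.1 t, cnt L.1 t <= cnt L'.2 t.+1 + 1,
      cnt L'.1 t <= cnt L.2 t + 1 & cnt L.2 t <= cnt L'.1 t.+1].

Lemma BplusA Z Z' L L' : size Z'.1 = size Z.2 ->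
  sorted geq L.1 -> sorted geq L.2 -> sorted geq L'.1 -> sorted geq L'.2 ->
  size L.1 = (size Z.2).+1 -> size L.2 = size Z.2 -> size L'.1 = size Z'.1 -> size L'.2 = size Z'.1 ->
  Bplus Z Z' L L' <-> forall t, condsA L L' t.
Proof.
move=> e s1 s2 s3 s4 z1 z2 z3 z4.
have sz1 : size L.1 <= (size L'.2).+1 by rewrite z1 z4 e.
have sz2 : size L.2 <= size L'.1 by rewrite z2 z3 e.
have D := dloop gtO_spec leO_spec s1 s4 sz1.
have C := cloop gtO_spec leO_spec s2 s3 sz2.
rewrite /Bplus /= e eqxx.
split.
- move=> [_ [/D [d1 d2] /C [c1 c2]]] t.
  have := d1 t; have := d2 t; have := c1 t; have := c2 t.
  rewrite !(addn1 t) !addn0 => h1 h2 h3 h4; by split.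
- move=> h; split.
    by rewrite /defect z1 z2 z3 z4 e; lia.
  split; [apply/D|apply/C]; split=> t; have [h1 h2 h3 h4] := h t; by rewrite ?(addn1 t) ?addn0.
Qed.

Lemma BplusB Z Z' L L' : size Z'.1 = (size Z.2).+1 ->
  sorted geq L.1 -> sorted geq L.2 -> sorted geq L'.1 -> sorted geq L'.2 ->
  size L.1 = (size Z.2).+1 -> size L.2 = size Z.2 -> size L'.1 = size Z'.1 -> size L'.2 = size Z'.1 ->
  Bplus Z Z' L L' <-> forall t, condsB L L' t.
Proof.
move=> e s1 s2 s3 s4 z1 z2 z3 z4.
have sz1 : size L.1 <= (size L'.2).+1 by rewrite z1 z4 e leqnSn.
have sz2 : size L.2 <= size L'.1 by rewrite z2 z3 e leqnSn.
have D := dloop geO_spec ltO_spec s1 s4 sz1.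
have C := cloop geO_spec ltO_spec s2 s3 sz2.
have ne : (size Z'.1 == size Z.2) = false by rewrite e; apply/negbTE; rewrite neq_ltn ltnSn orbT.
rewrite /Bplus /= ne.
split.
- move=> [_ [/D [d1 d2] /C [c1 c2]]] t.
  have := d1 t; have := d2 t; have := c1 t; have := c2 t.
  rewrite !(addn1 t) !addn0 => h1 h2 h3 h4; by split.
- move=> h; split.
    by rewrite /defect z1 z2 z3 z4 e; lia.
  split; [apply/D|apply/C]; split=> t; have [h1 h2 h3 h4] := h t; by rewrite ?(addn1 t) ?addn0.
Qed.

Lemma Sbar_info Y L : Sbar Y L ->
  [/\ sorted geq L.1, sorted geq L.2 & forall t, cnt L.1 t + cnt L.2 t = cnt Y.1 t + cnt Y.2 t].
Proof.
move=> [M [_ ->]]; split; [exact: sorted_moveM1|exact: sorted_moveM2|].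
move=> t; exact: cnt_moveM_tot.
Qed.

Lemma Sbar_self Y : is_symbol Y -> Sbar Y Y.
Proof.
move=> /andP[s1 s2]; exists [::]; split=> //.
rewrite /moveM.
have E1 : [seq x <- Y.1 | x \notin [::]] = Y.1 by apply/all_filterP/allP.
have E2 : [seq x <- Y.2 | x \notin [::]] = Y.2 by apply/all_filterP/allP.
have E3 : [seq x <- Y.1 | x \in [::]] = [::] by rewrite filter_pred0.
have E4 : [seq x <- Y.2 | x \in [::]] = [::] by rewrite filter_pred0.
rewrite E1 E2 E3 E4 !cats0 !sorted_sort //; try exact: geq_trans; try exact: sdecr_geq.
by case: Y {E1 E2 E3 E4} s1 s2.
Qed.

Lemma defect0_sizes Y L : Sbar Y L -> size Y.2 = size Y.1 ->
  defect L = 0%R <-> (size L.1 = size Y.1 /\ size L.2 = size Y.1).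
Proof.
move=> hS e; have [_ _ tot] := Sbar_info hS; have := tot 0; rewrite !cnt0 e /defect => t0.
split.
- move=> h; move: t0 h; set a := size L.1; set b := size L.2; set c := size Y.1; move=> t0 h; split; lia.
- move=> [h1 h2]; move: t0 h1 h2; set a := size L.1; set b := size L.2; set c := size Y.1; lia.
Qed.

Lemma defect1_sizes Y L : Sbar Y L -> size Y.1 = (size Y.2).+1 ->
  defect L = 1%R <-> (size L.1 = (size Y.2).+1 /\ size L.2 = size Y.2).
Proof.
move=> hS e; have [_ _ tot] := Sbar_info hS; have := tot 0; rewrite !cnt0 e /defect => t0.
split.
- move=> h; move: t0 h; set a := size L.1; set b := size L.2; set c := size Y.2; move=> t0 h; split; lia.
- move=> [h1 h2]; move: t0 h1 h2; set a := size L.1; set b := size L.2; set c := size Y.2; lia.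
Qed.

Lemma iA Z Z' L' : special1 Z -> special0 Z' -> size Z'.1 = size Z.2 ->
  Drel Z Z' Z L' <-> validY Z' (Valpha (Fc Z') (cnt Z.1) (Fc Z)) L'.
Proof.
move=> h1 h0 e; have iZ := special1_ispec h1.
have [isZ [szZ _]] := h1; have [isZ' [szZ' _]] := h0.
have [g1 g2 _ _ _] := ispec_facts iZ.
have SZ := Sbar_self isZ.
have dZ : defect Z = 1%R by apply/(defect1_sizes SZ szZ).
have dZ' : defect Z' = 0%R by apply/(defect0_sizes (Sbar_self isZ') (esym szZ')).
split.
- move=> [hB [_ [hS hd]]].
  have [t1 t2 tot] := Sbar_info hS.
  have [z3 z4] := (defect0_sizes hS (esym szZ')).1 hd.
  have hc := (BplusA e g1 g2 t1 t2 szZ erefl z3 z4).1 hB.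
  split=> //; split; first by rewrite hd dZ'.
  move=> t; have [c1 c2 c3 c4] := hc t; have := tot t; rewrite /Valpha /Fc => tt.
  split; clear -c1 c2 c3 c4 tt; lia.
- move=> [hS [hd hV]].
  have [t1 t2 tot] := Sbar_info hS.
  have hd0 : defect L' = 0%R by rewrite hd dZ'.
  have [z3 z4] := (defect0_sizes hS (esym szZ')).1 hd0.
  split; last by [].
  apply/(BplusA e g1 g2 t1 t2 szZ erefl z3 z4) => t.
  have := hV t; rewrite /Valpha /Fc => -[c1 c2 c3 c4]; have := tot t => tt.
  split; clear -c1 c2 c3 c4 tt; lia.
Qed.

Lemma iB Z Z' L' : special1 Z -> special0 Z' -> size Z'.1 = (size Z.2).+1 ->
  Drel Z Z' Z L' <-> validY Z' (Vbeta (Fc Z') (cnt Z.1) (Fc Z)) L'.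
Proof.
move=> h1 h0 e; have iZ := special1_ispec h1.
have [isZ [szZ _]] := h1; have [isZ' [szZ' _]] := h0.
have [g1 g2 _ _ _] := ispec_facts iZ.
have SZ := Sbar_self isZ.
have dZ : defect Z = 1%R by apply/(defect1_sizes SZ szZ).
have dZ' : defect Z' = 0%R by apply/(defect0_sizes (Sbar_self isZ') (esym szZ')).
split.
- move=> [hB [_ [hS hd]]].
  have [t1 t2 tot] := Sbar_info hS.
  have [z3 z4] := (defect0_sizes hS (esym szZ')).1 hd.
  have hc := (BplusB e g1 g2 t1 t2 szZ erefl z3 z4).1 hB.
  split=> //; split; first by rewrite hd dZ'.
  move=> t; have [c1 c2 c3 c4] := hc t; have := tot t; rewrite /Vbeta /Fc => tt.
  split; [clear -c1 c2 c3 c4 tt; lia|clear -c1 c2 c3 c4 tt; lia|].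
  move=> s es; subst t; have [d1 d2 d3 d4] := hc s.
  split; clear -d1 d2 d3 d4 tt; lia.
- move=> [hS [hd hV]].
  have [t1 t2 tot] := Sbar_info hS.
  have hd0 : defect L' = 0%R by rewrite hd dZ'.
  have [z3 z4] := (defect0_sizes hS (esym szZ')).1 hd0.
  split; last by [].
  apply/(BplusB e g1 g2 t1 t2 szZ erefl z3 z4) => t.
  have := hV t; rewrite /Vbeta /Fc => -[c1 c2 _]; have := tot t => tt.
  have := hV t.+1; rewrite /Vbeta /Fc => -[_ _ /(_ t erefl) [c3 c4]]; have := tot t.+1 => tt1.
  split; clear -c1 c2 c3 c4 tt tt1; lia.
Qed.

Lemma iiA Z Z' L : special1 Z -> special0 Z' -> size Z'.1 = size Z.2 ->
  Drel Z Z' L Z' <-> validY Z (Vbeta (Fc Z) (cnt Z'.1) (Fc Z')) L.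
Proof.
move=> h1 h0 e; have iZ' := special0_ispec h0.
have [isZ [szZ _]] := h1; have [isZ' [szZ' _]] := h0.
have [g1 g2 _ _ _] := ispec_facts iZ'.
have SZ' := Sbar_self isZ'.
have dZ : defect Z = 1%R by apply/(defect1_sizes (Sbar_self isZ) szZ).
have dZ' : defect Z' = 0%R by apply/(defect0_sizes SZ' (esym szZ')).
split.
- move=> [hB [[hS hd] _]].
  have [t1 t2 tot] := Sbar_info hS.
  have [z1 z2] := (defect1_sizes hS szZ).1 hd.
  have hc := (BplusA e t1 t2 g1 g2 z1 z2 erefl (esym szZ')).1 hB.
  split=> //; split; first by rewrite hd dZ.
  move=> t; have [c1 c2 c3 c4] := hc t; have := tot t; rewrite /Vbeta /Fc => tt.
  split; [clear -c1 c2 c3 c4 tt; lia|clear -c1 c2 c3 c4 tt; lia|].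
  move=> s es; subst t; have [d1 d2 d3 d4] := hc s.
  split; clear -d1 d2 d3 d4 tt; lia.
- move=> [hS [hd hV]].
  have [t1 t2 tot] := Sbar_info hS.
  have hd1 : defect L = 1%R by rewrite hd dZ.
  have [z1 z2] := (defect1_sizes hS szZ).1 hd1.
  split; last by [].
  apply/(BplusA e t1 t2 g1 g2 z1 z2 erefl (esym szZ')) => t.
  have := hV t; rewrite /Vbeta /Fc => -[c1 c2 _]; have := tot t => tt.
  have := hV t.+1; rewrite /Vbeta /Fc => -[_ _ /(_ t erefl) [c3 c4]]; have := tot t.+1 => tt1.
  split; clear -c1 c2 c3 c4 tt tt1; lia.
Qed.

Lemma iiB Z Z' L : special1 Z -> special0 Z' -> size Z'.1 = (size Z.2).+1 ->
  Drel Z Z' L Z' <-> validY Z (Valpha (Fc Z) (cnt Z'.1) (Fc Z')) L.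
Proof.
move=> h1 h0 e; have iZ' := special0_ispec h0.
have [isZ [szZ _]] := h1; have [isZ' [szZ' _]] := h0.
have [g1 g2 _ _ _] := ispec_facts iZ'.
have SZ' := Sbar_self isZ'.
have dZ : defect Z = 1%R by apply/(defect1_sizes (Sbar_self isZ) szZ).
have dZ' : defect Z' = 0%R by apply/(defect0_sizes SZ' (esym szZ')).
split.
- move=> [hB [[hS hd] _]].
  have [t1 t2 tot] := Sbar_info hS.
  have [z1 z2] := (defect1_sizes hS szZ).1 hd.
  have hc := (BplusB e t1 t2 g1 g2 z1 z2 erefl (esym szZ')).1 hB.
  split=> //; split; first by rewrite hd dZ.
  move=> t; have [c1 c2 c3 c4] := hc t; have := tot t; rewrite /Valpha /Fc => tt.
  split; clear -c1 c2 c3 c4 tt; lia.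
- move=> [hS [hd hV]].
  have [t1 t2 tot] := Sbar_info hS.
  have hd1 : defect L = 1%R by rewrite hd dZ.
  have [z1 z2] := (defect1_sizes hS szZ).1 hd1.
  split; last by [].
  apply/(BplusB e t1 t2 g1 g2 z1 z2 erefl (esym szZ')) => t.
  have := hV t; rewrite /Valpha /Fc => -[c1 c2 c3 c4]; have := tot t => tt.
  split; clear -c1 c2 c3 c4 tt; lia.
Qed.


Theorem proposition0307 (Z Z' : symbol) :
  special1 Z -> special0 Z' ->
  (size Z'.1 = size Z.2 \/ size Z'.1 = (size Z.2).+1) ->
  (exists L L', Drel Z Z' L L') ->
  (exists P0' : seq (nat * nat), disj_cons_pairs Z' P0' /\
     forall L', Drel Z Z' Z L' <->
       exists P', subseq P' P0' /\ L' = moveM Z' (pairs_union P')) /\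
  (exists P0 : seq (nat * nat), disj_cons_pairs Z P0 /\
     forall L, Drel Z Z' L Z' <->
       exists P, subseq P P0 /\ L = moveM Z (pairs_union P)).
Proof.
move=> h1 h0 hm [L [L' [hB [[hS hd] [hS' hd']]]]].
have iZ := special1_ispec h1; have iZ' := special0_ispec h0.
have [isZ [szZ _]] := h1; have [isZ' [szZ' _]] := h0.
have [t1 t2 tot] := Sbar_info hS; have [t3 t4 tot'] := Sbar_info hS'.
have [z1 z2] := (defect1_sizes hS szZ).1 hd.
have [z3 z4] := (defect0_sizes hS' (esym szZ')).1 hd'.
have FZ0 : Fc Z 0 = (size Z.2).*2.+1 by rewrite /Fc !cnt0 szZ; lia.
have FZ'0 : Fc Z' 0 = (size Z'.1).*2 by rewrite /Fc !cnt0 szZ'; lia.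
case: hm => e.
- have hc := (BplusA e t1 t2 t3 t4 z1 z2 z3 z4).1 hB.
  have facts : forall t, Fc Z t <= Fc Z' t + 1 /\ Fc Z' t <= Fc Z t.+1 + 1.
    move=> t; have [c1 c2 c3 c4] := hc t; have := tot t; have := tot t.+1; have := tot' t.
    rewrite /Fc => e1 e2 e3; split; clear -c1 c2 c3 c4 e1 e2 e3; lia.
  split.
  + have [P0 [hd0 hP]] := generic iZ' (alpha_good iZ' iZ facts).
    exists P0; split=> // L1; exact: iff_trans (iA L1 h1 h0 e) (hP L1).
  + have h00 : Fc Z' 0 <= Fc Z 0 by rewrite FZ0 FZ'0 e; lia.
    have [P0 [hd0 hP]] := generic iZ (beta_good iZ iZ' facts h00).
    exists P0; split=> // L1; exact: iff_trans (iiA L1 h1 h0 e) (hP L1).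
- have hc := (BplusB e t1 t2 t3 t4 z1 z2 z3 z4).1 hB.
  have facts : forall t, Fc Z' t <= Fc Z t + 1 /\ Fc Z t <= Fc Z' t.+1 + 1.
    move=> t; have [c1 c2 c3 c4] := hc t; have := tot t; have := tot' t.+1; have := tot' t.
    rewrite /Fc => e1 e2 e3; split; clear -c1 c2 c3 c4 e1 e2 e3; lia.
  split.
  + have h00 : Fc Z 0 <= Fc Z' 0 by rewrite FZ0 FZ'0 e; lia.
    have [P0 [hd0 hP]] := generic iZ' (beta_good iZ' iZ facts h00).
    exists P0; split=> // L1; exact: iff_trans (iB L1 h1 h0 e) (hP L1).
  + have [P0 [hd0 hP]] := generic iZ (alpha_good iZ iZ' facts).
    exists P0; split=> // L1; exact: iff_trans (iiB L1 h1 h0 e) (hP L1).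
Qed.
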